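(* Let $r\geq 2$ be an integer and let $x_i$ ($1\le i\le r$) and $y_{i,j}$ ($2\le i\le j\le r$) be formal variables. Let $\mathcal{U}_r$ be the set of unordered increasing trees with vertex-set $\{1,\dots,r\}$. For $T\in\mathcal{U}_r$ define \[ \mathrm{wt}_y(T)=\prod_{v=2}^r\Big(x_{f_T(v)}\sum_{u\in \mathfrak{h}_T(v)} y_{v,u}\Big). \] Then \[ \sum_{T\in\mathcal{U}_r}\mathrm{wt}_y(T)= x_1\,y_{r,r}\prod_{i=2}^{r-1}\Bigg(\sum_{j=1}^{i} x_j\,y_{i,i}+\sum_{j=i+1}^{r} x_i\,y_{i,j}\Bigg). \]
   Context: A rooted tree has its edges oriented towards the root; the head of an edge is the father of its tail (the son). For a non-root vertex $v$ of a rooted tree $T$, $f_T(v)$ denotes its father. Descendants of a vertex are its sons and, recursively, descendants of its sons. An unordered increasing tree with vertex-set $\{1,\dots,r\}$ is a rooted tree on these labelled vertices (sons of a vertex are not ordered) such that the label of each son is larger than the label of its father (so the root is $1$). The hook $\mathfrak{h}_T(v)$ is the set consisting of $v$ and all its descendants in $T$. *)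

(* Defs.v *)
From mathcomp Require Import all_boot all_order all_algebra.
Set Implicit Arguments. Unset Strict Implicit. Unset Printing Implicit Defensive.
Import GRing.Theory.
Local Open Scope ring_scope.

(* Vertex v : 'I_r stands for the label v.+1 in {1,...,r}; the root 1 is ord 0.
   A rooted tree on 'I_r is encoded by its father map T : {ffun 'I_r -> 'I_r}
   (with the convention T root = root).  It is an unordered increasing tree
   iff the root is fixed and every non-root vertex has a father with a
   smaller label (this determines a tree rooted at 1, and every increasing
   tree arises from exactly one such map). *)
Definition incr_tree (r : nat) (T : {ffun 'I_r -> 'I_r}) : bool :=
  [forall v : 'I_r, if (v == 0 :> nat) then T v == v else (T v < v)%N].

(* Hook of v: v together with all its descendants, i.e. all u some iterate
   of the father map sends to v (depth < r so r iterates suffice). *)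
Definition hook (r : nat) (T : {ffun 'I_r -> 'I_r}) (v : 'I_r) : {set 'I_r} :=
  [set u : 'I_r | [exists k : 'I_r.+1, iter k T u == v]].

Definition wt_y (R : comRingType) (r : nat) (x : nat -> R) (y : nat -> nat -> R)
  (T : {ffun 'I_r -> 'I_r}) : R :=
  \prod_(v : 'I_r | (0 < v)%N)
     (x (T v).+1 * \sum_(u in hook T v) y v.+1 u.+1).

(* Main.v *)
Require Import Defs.
From mathcomp Require Import all_boot all_order all_algebra.
From mathcomp Require Import zify ring.
Import GRing.Theory.
Set Implicit Arguments. Unset Strict Implicit. Unset Printing Implicit Defensive.

Section Trees.
Variable K : nat.
Notation wd := (widen_ord (leqnSn K)).

Definition ext (T : {ffun 'I_K -> 'I_K}) (p : 'I_K) : {ffun 'I_K.+1 -> 'I_K.+1} :=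
  [ffun v => if unlift ord_max v is Some w then wd (T w) else wd p].

Lemma wd_lift (w : 'I_K) : wd w = lift ord_max w.
Proof. by apply: val_inj; rewrite /= /bump leqNgt ltn_ord. Qed.

Lemma ext_wd T p w : ext T p (wd w) = wd (T w).
Proof. by rewrite ffunE wd_lift liftK. Qed.

Lemma ext_max T p : ext T p ord_max = wd p.
Proof. by rewrite ffunE unlift_none. Qed.

Lemma incrP r (T : {ffun 'I_r -> 'I_r}) :
  incr_tree T -> forall v : 'I_r, (T v <= v)%N /\ ((v:nat) = 0%N -> T v = v).
Proof.
move/forallP=> H v; have := H v; case: eqP => [v0 /eqP -> //|v0 /ltnW] //.
Qed.

Lemma incr_lt r (T : {ffun 'I_r -> 'I_r}) (v : 'I_r) :
  incr_tree T -> (v:nat) != 0%N -> (T v < v)%N.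
Proof. move/forallP=> H v0; have := H v; by rewrite (negbTE v0). Qed.

Lemma iter_le r (T : {ffun 'I_r -> 'I_r}) (u : 'I_r) k :
  incr_tree T -> (iter k T u <= u - k)%N.
Proof.
move=> hT; elim: k => [|k IH]; first by rewrite subn0.
rewrite iterS; set w := iter k T u in IH *.
have [w0|w0] := eqVneq (w:nat) 0%N.
  by have [_ ->] := incrP hT w; rewrite ?w0.
have := incr_lt hT w0; rewrite subnS; move: IH; clear; lia.
Qed.

Lemma iter_bound r (T : {ffun 'I_r -> 'I_r}) (u v : 'I_r) k :
  incr_tree T -> iter k T u = v -> iter (minn k u) T u = v.
Proof.
move=> hT; case: (leqP k u) => hk; first by [].
move=> hv.
have h1 := iter_le u k hT; have h2 := iter_le u u hT.
apply: val_inj; rewrite -hv; move: h1 h2; rewrite subnn.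
have -> : (u - k = 0)%N by apply/eqP; rewrite subn_eq0 ltnW.
rewrite !leqn0 => h3 h4.
change (nat_of_ord (iter u T u) = nat_of_ord (iter k T u)); by rewrite (eqP h3) (eqP h4).
Qed.

Lemma iter_ext_wd T p k w : iter k (ext T p) (wd w) = wd (iter k T w).
Proof. by elim: k => [//|k IH]; rewrite !iterS IH ext_wd. Qed.

Lemma hook_wd T p u v : incr_tree T ->
  (wd u \in hook (ext T p) (wd v)) = (u \in hook T v).
Proof.
move=> hT; rewrite !inE; apply/existsP/existsP => [[k /eqP hk]|[k /eqP hk]].
  have hk' : iter k T u = v.
    by apply: val_inj; move: hk; rewrite iter_ext_wd => /(congr1 val).
  have := iter_bound hT hk'; set k' := minn k u => hk2.
  have lk : (k' < K.+1)%N by rewrite ltnS /k' (leq_trans (geq_minr _ _)) // ltnW.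
  by exists (Ordinal lk); rewrite /= hk2.
have lk : (k < K.+2)%N by rewrite (leq_trans (ltn_ord k)).
by exists (Ordinal lk); rewrite /= iter_ext_wd hk.
Qed.

Lemma hook_max T p v :
  (ord_max \in hook (ext T p) (wd v)) = (p \in hook T v).
Proof.
rewrite !inE; apply/existsP/existsP => [[[[|k] lk] /eqP /= hk]|[[k lk] /eqP /= hk]].
- by move: hk => /(congr1 val) /= hK; move: (ltn_ord v); rewrite -hK ltnn.
- move: hk; rewrite -iterS iterSr ext_max iter_ext_wd => /(congr1 val) hk.
  by exists (Ordinal (lk : (k < K.+1)%N)); apply/eqP/val_inj.
by exists (Ordinal (lk : (k.+1 < K.+2)%N)); rewrite /= -iterS iterSr ext_max iter_ext_wd hk.
Qed.

Lemma hook_max_wd T p u : (wd u \in hook (ext T p) ord_max) = false.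
Proof.
rewrite inE; apply/negbTE/negP => /existsP [k] /eqP; rewrite iter_ext_wd.
by move/(congr1 val) => /= hK; move: (ltn_ord (iter k T u)); rewrite hK ltnn.
Qed.

Lemma hook_max_max T p : ord_max \in hook (ext T p) ord_max.
Proof. by rewrite inE; apply/existsP; exists ord0. Qed.

Lemma hook_refl r (T : {ffun 'I_r -> 'I_r}) v : v \in hook T v.
Proof. by rewrite inE; apply/existsP; exists ord0. Qed.

Lemma iter_mono r (T : {ffun 'I_r -> 'I_r}) (u : 'I_r) a b : incr_tree T ->
  (a <= b)%N -> (iter b T u <= iter a T u)%N.
Proof.
move=> hT /subnK <-; elim: (b - a)%N => [//|c IH].
by rewrite addSn iterS (leq_trans _ IH) //; case: (incrP hT (iter (c + a) T u)).
Qed.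

Lemma hook_chain r (T : {ffun 'I_r -> 'I_r}) (p m w : 'I_r) : incr_tree T ->
  p \in hook T m -> (w < m)%N -> (p \in hook T w) = (m \in hook T w).
Proof.
move=> hT; rewrite !inE => /existsP [a /eqP ha] wm.
apply/existsP/existsP => [[b /eqP hb]|[b /eqP hb]].
- have ab : (a < b)%N.
    rewrite ltnNge; apply/negP => ba.
    have := iter_mono p hT ba; rewrite ha hb; move: wm; clear; lia.
  have e : iter (b - a) T m = w by rewrite -ha -iterD subnK // ltnW.
  have := iter_bound hT e => e2.
  have lk : (minn (b - a) m < r.+1)%N.
    by rewrite ltnS (leq_trans (geq_minr _ _)) // ltnW.
  by exists (Ordinal lk); rewrite /= e2.
- have e : iter (b + a) T p = w by rewrite iterD ha hb.
  have := iter_bound hT e => e2.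
  have lk : (minn (b + a) p < r.+1)%N.
    by rewrite ltnS (leq_trans (geq_minr _ _)) // ltnW.
  by exists (Ordinal lk); rewrite /= e2.
Qed.

End Trees.

Local Open Scope ring_scope.

Section Reindex.
Variable k : nat.
Notation K := k.+1.
Notation wd := (widen_ord (leqnSn K)).

Definition res (T : {ffun 'I_K.+1 -> 'I_K.+1}) : {ffun 'I_K -> 'I_K} * 'I_K :=
  ([ffun w => inord (T (wd w))], inord (T ord_max)).

Lemma incr_lt_max (T : {ffun 'I_K.+1 -> 'I_K.+1}) v : incr_tree T -> (T v < K.+1)%N.
Proof. by []. Qed.

Lemma incr_wd_lt (T : {ffun 'I_K.+1 -> 'I_K.+1}) (w : 'I_K) : incr_tree T -> (T (wd w) < K)%N.
Proof.
move=> hT; have [h _] := incrP hT (wd w); exact: leq_ltn_trans h (ltn_ord w).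
Qed.

Lemma incr_max_lt (T : {ffun 'I_K.+1 -> 'I_K.+1}) : incr_tree T -> (T ord_max < K)%N.
Proof. by move=> hT; apply: incr_lt. Qed.

Lemma incr_res T : incr_tree T -> incr_tree (res T).1.
Proof.
move=> hT; apply/forallP => w; rewrite /res /= ffunE.
have := forallP hT (wd w); rewrite /=.
have e : nat_of_ord (inord (T (wd w)) : 'I_K) = T (wd w) by rewrite inordK // incr_wd_lt.
case: ifP => _; last by rewrite e.
move=> /eqP /(congr1 val) /= h; apply/eqP/val_inj; by rewrite /= e h.
Qed.

Lemma incr_ext (T : {ffun 'I_K -> 'I_K}) p : incr_tree T -> incr_tree (ext T p).
Proof.
move=> hT; apply/forallP => v; case: (unliftP ord_max v) => [w ->|->].
  rewrite -wd_lift ext_wd /=; have := forallP hT w.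
  case: ifP => _; last by [].
  by move=> /eqP h; rewrite h.
by rewrite ext_max /=.
Qed.

Lemma ext_res T : incr_tree T -> ext (res T).1 (res T).2 = T.
Proof.
move=> hT; apply/ffunP => v; case: (unliftP ord_max v) => [w ->|->].
  rewrite -wd_lift ext_wd /res /= ffunE; apply: val_inj => /=.
  by rewrite inordK // incr_wd_lt.
by rewrite ext_max /res /=; apply: val_inj => /=; rewrite inordK // incr_max_lt.
Qed.

Lemma res_ext T p : res (ext T p) = (T, p).
Proof.
rewrite /res ext_max; congr pair.
  apply/ffunP => w; rewrite ffunE ext_wd; apply: val_inj; by rewrite /= inordK.
by apply: val_inj; rewrite /= inordK.
Qed.

Lemma sum_ext (R : comRingType) (F : {ffun 'I_K.+1 -> 'I_K.+1} -> R) :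
  \sum_(T | incr_tree T) F T =
  \sum_(T' : {ffun 'I_K -> 'I_K} | incr_tree T') \sum_(p : 'I_K) F (ext T' p).
Proof.
rewrite (partition_big res (fun q => incr_tree q.1)); last exact: incr_res.
rewrite [RHS]pair_big_dep; apply: eq_big => [q|q]; first by rewrite andbT.
move=> hq; rewrite (big_pred1 (ext q.1 q.2)) //.
move=> T /=; apply/andP/eqP => [[hT /eqP <-]|->].
  by rewrite ext_res.
by split; [exact: incr_ext | rewrite res_ext; case: q hq].
Qed.

End Reindex.


Section Wt.
Variable R : comRingType.
Variable K : nat.
Notation wd := (widen_ord (leqnSn K)).

Lemma sum_hook_ext (T : {ffun 'I_K -> 'I_K}) p (w : 'I_K) (f : nat -> R) :
  incr_tree T ->
  \sum_(u in hook (ext T p) (wd w)) f u.+1 =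
  \sum_(u in hook T w) f u.+1 + (if p \in hook T w then f K.+1 else 0).
Proof.
move=> hT; rewrite big_mkcond big_ord_recr /= hook_max; congr (_ + _).
rewrite [RHS]big_mkcond; apply: eq_bigr => u _; by rewrite hook_wd.
Qed.

Lemma sum_hook_max (T : {ffun 'I_K -> 'I_K}) p (f : nat -> R) :
  \sum_(u in hook (ext T p) ord_max) f u.+1 = f K.+1.
Proof.
rewrite big_mkcond big_ord_recr /= hook_max_max big1 ?add0r // => u _.
by rewrite hook_max_wd.
Qed.

Lemma wt_ext (x : nat -> R) (y : nat -> nat -> R) (T : {ffun 'I_K -> 'I_K}) p :
  incr_tree T ->
  wt_y x y (ext T p) = (x p.+1 * y K.+1 K.+1) *
    \prod_(w : 'I_K | (0 < w)%N)
      (x (T w).+1 * (\sum_(u in hook T w) y w.+1 u.+1 +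
                     (if p \in hook T w then y w.+1 K.+1 else 0))).
Proof.
move=> hT; rewrite /wt_y big_mkcond big_ord_recr /= mulrC.
have K0 : (0 < K)%N := leq_ltn_trans (leq0n p) (ltn_ord p).
rewrite K0 ext_max sum_hook_max /=; congr (_ * _).
rewrite [RHS]big_mkcond; apply: eq_bigr => w _ /=.
by rewrite ext_wd sum_hook_ext.
Qed.

End Wt.


Section Tele.
Variable R : comRingType.

Definition piece (a b : nat -> R) (m i : nat) :=
  if (i < m)%N then a i else if i == m then a i - b i else b i.

Lemma tele (a b : nat -> R) j k :
  \prod_(j <= i < k) a i = \prod_(j <= i < k) b i +
    \sum_(j <= m < k) \prod_(j <= i < k) piece a b m i.
Proof.
elim: k => [|k IH]; first by rewrite !big_geq // addr0.
case: (leqP j k) => hjk; last by rewrite !big_geq // addr0.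
rewrite !big_nat_recr //= IH.
have E1 : \sum_(j <= m < k) \prod_(j <= i < k.+1) piece a b m i =
   \sum_(j <= m < k) (\prod_(j <= i < k) piece a b m i) * b k.
  apply: eq_big_nat => m /andP [_ hm]; rewrite big_nat_recr //= /piece ltnNge (ltnW hm) /=.
  by rewrite gtn_eqF.
have E2 : \prod_(j <= i < k) piece a b k i = \prod_(j <= i < k) a i.
  by apply: eq_big_nat => i /andP [_ hi]; rewrite /piece hi.
rewrite E1 E2 {E1 E2}.
rewrite /piece ltnn eqxx -mulr_suml IH; ring.
Qed.

Lemma tele_ord k (a b : 'I_k.+1 -> R) :
  \prod_(i : 'I_k.+1) a i = \prod_(i : 'I_k.+1) b i +
    \sum_(m : 'I_k.+1) \prod_(i : 'I_k.+1)
       (if (i < m)%N then a i else if i == m then a i - b i else b i).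
Proof.
have conv (f : 'I_k.+1 -> R) : \prod_(i : 'I_k.+1) f i = \prod_(0 <= i < k.+1) f (inord i).
  by rewrite big_mkord; apply: eq_bigr => i _; rewrite inord_val.
rewrite !conv (tele (fun i => a (inord i)) (fun i => b (inord i)) 0 k.+1).
congr (_ + _); rewrite big_mkord; apply: eq_bigr => m _; rewrite conv.
apply: eq_big_nat => i /andP [_ hi]; rewrite /piece !inordK //.
by rewrite -[inord i == m]val_eqE /= inordK.
Qed.

Lemma prod_ins (I : finType) (m : I) (f : I -> R) s :
  \prod_(i : I) (if i == m then f i * s else f i) = s * \prod_(i : I) f i.
Proof.
rewrite (bigD1 m) //= eqxx [in RHS](bigD1 m) //=.
rewrite (eq_bigr f); last by move=> i /negbTE ->.
ring.
Qed.

Lemma prod_ins_nat (m j k : nat) (f : nat -> R) s : (j <= m < k)%N ->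
  \prod_(j <= i < k) (if i == m then f i * s else f i) = s * \prod_(j <= i < k) f i.
Proof.
move=> hm.
have mi : m \in index_iota j k by rewrite mem_index_iota.
rewrite (bigD1_seq m) ?iota_uniq //= eqxx [in RHS](bigD1_seq m) ?iota_uniq //=.
rewrite (eq_bigr f); last by move=> i /negbTE ->.
ring.
Qed.

Lemma sum_ind_nat (m j k : nat) (c : R) : (j <= m < k)%N ->
  \sum_(j <= i < k) (if i == m then c else 0) = c.
Proof.
move=> hm.
have mi : m \in index_iota j k by rewrite mem_index_iota.
rewrite (bigD1_seq m) ?iota_uniq //= eqxx big1 ?addr0 // => i /negbTE -> //.
Qed.

End Tele.


Definition ym (R : comRingType) (r : nat) (x : nat -> R) (y : nat -> nat -> R) (l : nat) :
  nat -> nat -> R :=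
  fun a b => if (a < l)%N then y a b + (if b == l then y a r else 0)
             else if a == l then y a r * x b else y a b.

Section PerTree.
Variable R : comRingType.
Variable k : nat.
Notation K := k.+1.
Variables (x : nat -> R) (y : nat -> nat -> R) (T : {ffun 'I_K -> 'I_K}).
Hypothesis hT : incr_tree T.

Let Y (w : 'I_K) := \sum_(u in hook T w) y w.+1 u.+1.
Let c (w : 'I_K) := y w.+1 K.+1.
Let A (p w : 'I_K) := if (0 < w)%N then x (T w).+1 * (Y w + (if p \in hook T w then c w else 0)) else 1.
Let B (w : 'I_K) := if (0 < w)%N then x (T w).+1 * Y w else 1.
Let Am (m w : 'I_K) := if (0 < w)%N then x (T w).+1 * (Y w + (if m \in hook T w then c w else 0)) else 1.
Let Q (m w : 'I_K) := if (w < m)%N then Am m w else if w == m then x (T w).+1 * c w else B w.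

Lemma sum_ind (S : {set 'I_K}) (m : 'I_K) (d : R) :
  \sum_(u in S) (if (u:nat).+1 == (m:nat).+1 then d else 0) = if m \in S then d else 0.
Proof.
rewrite -big_mkcondr; case: (boolP (m \in S)) => hm.
  rewrite (big_pred1 m) // => u /=; rewrite eqSS val_eqE.
  by case: eqP => [->|]; rewrite ?hm ?andbF.
rewrite big_pred0 // => u /=; rewrite eqSS val_eqE.
by case: eqP => [->|]; rewrite ?(negbTE hm) ?andbF.
Qed.

Lemma per_m (m : 'I_K) :
  \sum_(p : 'I_K) x p.+1 * \prod_(w : 'I_K)
     (if (w < m)%N then A p w else if w == m then A p w - B w else B w)
  = if (0 < m)%N then wt_y x (ym K.+1 x y m.+1) T else 0.
Proof.
case: ifP => m0; last first.
  apply: big1 => p _; rewrite (bigD1 m) //= ltnn eqxx /A /B m0 subrr mul0r.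
  by rewrite mulr0.
have E (p : 'I_K) : x p.+1 * \prod_(w : 'I_K)
     (if (w < m)%N then A p w else if w == m then A p w - B w else B w)
  = (if p \in hook T m then x p.+1 else 0) * \prod_(w : 'I_K) Q m w.
  case: (boolP (p \in hook T m)) => hp.
    congr (_ * _); apply: eq_bigr => w _; rewrite /Q.
    case: ltnP => wm.
      by rewrite /A /Am (hook_chain hT hp wm).
    case: eqP => [->|//]; rewrite /A /B m0 hp; ring.
  rewrite mul0r (bigD1 m) //= ltnn eqxx /A /B m0 (negbTE hp) addr0 subrr.
  by rewrite mul0r mulr0.
rewrite (eq_bigr _ (fun p _ => E p)) -mulr_suml.
rewrite /wt_y [RHS]big_mkcond /= -(prod_ins m); apply: eq_bigr => w _.
rewrite /Q; case: (ltngtP w m) => [wm|mw|/val_inj ->].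
- rewrite -[w == m]val_eqE /= (ltn_eqF wm) /Am /ym; case: ifP => w0 //; congr (_ * _).
  rewrite ltnS wm big_split /= sum_ind //.
- rewrite -[w == m]val_eqE /= (gtn_eqF mw) /B /ym; have -> : (0 < w)%N by apply: leq_ltn_trans mw.
  congr (_ * _); apply: eq_bigr => u _.
  by rewrite ltnNge ltnW //= gtn_eqF.
- rewrite eqxx m0 /ym ltnn eqxx /c -mulrA; congr (_ * _).
  rewrite [RHS]big_mkcond mulr_sumr; apply: eq_bigr => u _.
  by case: ifP; rewrite ?mulr0.
Qed.

Lemma per_tree :
  \sum_(p : 'I_K) wt_y x y (ext T p) =
  y K.+1 K.+1 * ((\sum_(p : 'I_K) x p.+1) * wt_y x y T +
                 \sum_(m : 'I_K | (0 < m)%N) wt_y x (ym K.+1 x y m.+1) T).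
Proof.
have E (p : 'I_K) : wt_y x y (ext T p) = y K.+1 K.+1 * (x p.+1 * (\prod_(w : 'I_K) B w +
   \sum_(m : 'I_K) \prod_(w : 'I_K)
     (if (w < m)%N then A p w else if w == m then A p w - B w else B w))).
  rewrite wt_ext // big_mkcond -tele_ord mulrA [y _ _ * _]mulrC; congr (_ * _).
rewrite (eq_bigr _ (fun p _ => E p)) -mulr_sumr; congr (_ * _).
under eq_bigr do rewrite mulrDr.
rewrite big_split /= -mulr_suml; congr (_ * _ + _).
  by rewrite /wt_y [RHS]big_mkcond.
under eq_bigr do rewrite mulr_sumr.
rewrite exchange_big /= [RHS]big_mkcond; apply: eq_bigr => m _.
exact: per_m.
Qed.

End PerTree.


Section Alg.
Variable R : comRingType.
Variables (x : nat -> R) (y : nat -> nat -> R).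

Definition Gf r (z : nat -> nat -> R) (i : nat) :=
  \sum_(1 <= j < i.+1) x j * z i i + \sum_(i.+1 <= j < r.+1) x i * z i j.
Definition RHSf r (z : nat -> nat -> R) :=
  x 1%N * z r r * \prod_(2 <= i < r) Gf r z i.

Variable N : nat.
Notation r := N.+1.
Let S := \sum_(1 <= j < N.+1) x j.

Lemma G_diff i : (i <= N)%N -> Gf r y i = Gf N y i + x i * y i r.
Proof. by move=> hi; rewrite /Gf [X in _ + X]big_nat_recr //= addrA. Qed.

Lemma G_lt i l : (i < l)%N -> (l <= N)%N -> Gf N (ym r x y l) i = Gf r y i.
Proof.
move=> il lN; rewrite G_diff ?(leq_trans (ltnW il)) // /Gf /ym il (ltn_eqF il) addr0.
rewrite -addrA; congr (_ + _).
under eq_bigr do rewrite mulrDr.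
rewrite big_split /=; congr (_ + _).
rewrite (eq_bigr (fun j => if j == l then x i * y i r else 0)).
  by rewrite sum_ind_nat // il ltnS.
by move=> j _; case: eqP; rewrite ?mulr0.
Qed.

Lemma G_gt i l : (l < i)%N -> Gf N (ym r x y l) i = Gf N y i.
Proof.
move=> li; rewrite /Gf /ym ltnNge (ltnW li) /= (gtn_eqF li).
by [].
Qed.

Lemma G_eq l : (1 <= l <= N)%N -> Gf N (ym r x y l) l = x l * y l r * S.
Proof.
move=> /andP [l1 lN]; rewrite /Gf /ym ltnn eqxx /S (big_cat_nat _ (m := 1%N) (n := l.+1) (p := N.+1)) //=.
rewrite mulrDr !mulr_sumr; congr (_ + _); apply: eq_bigr => j _; ring.
Qed.

Lemma last_ym l : (l <= N)%N -> ym r x y l N N = if (l < N)%N then y N N else y N r * x N.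
Proof.
rewrite /ym leq_eqVlt => /orP [/eqP ->|lN]; first by rewrite ltnn eqxx.
by rewrite ltnNge (ltnW lN) /= (gtn_eqF lN) lN.
Qed.

Lemma final_alg : (2 <= N)%N ->
  y r r * ((\sum_(p : 'I_N) x p.+1) * RHSf N y +
           \sum_(m : 'I_N | (0 < m)%N) RHSf N (ym r x y m.+1)) = RHSf r y.
Proof.
move=> N2.
have ES : \sum_(p : 'I_N) x p.+1 = S.
  by rewrite /S -(big_mkord xpredT (fun p => x p.+1)) big_add1.
have EM (f : nat -> R) : \sum_(m : 'I_N | (0 < m)%N) f m.+1 = \sum_(2 <= l < N.+1) f l.
  case: N N2 => [|[|n]] // _.
  rewrite big_mkcond big_ord_recl /= add0r.
  rewrite -(big_mkord xpredT (fun i => f i.+2)) big_add1 big_add1 /=.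
  by apply: eq_bigr.
rewrite ES (EM (fun l => RHSf N (ym r x y l))) big_nat_recr //=.
set H := fun i => Gf N y i.
set Gr := fun i => Gf r y i.
have Ht := tele Gr H 2 N.
have E1 : RHSf N (ym r x y N) = x 1%N * y N r * x N * \prod_(2 <= i < N) Gr i.
  rewrite /RHSf last_ym // ltnn mulrA; congr (_ * _).
  by apply: eq_big_nat => i /andP [_ hi]; rewrite G_lt.
have E2 : \sum_(2 <= l < N) RHSf N (ym r x y l) =
          x 1%N * y N N * S * \sum_(2 <= l < N) \prod_(2 <= i < N) piece Gr H l i.
  rewrite mulr_sumr; apply: eq_big_nat => l /andP [l2 lN].
  rewrite /RHSf (last_ym (ltnW lN)) lN -!mulrA; congr (_ * (_ * _)).
  rewrite -(@prod_ins_nat R l 2 N (piece Gr H l) S) ?l2 ?lN //.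
  apply: eq_big_nat => i /andP [i2 iN].
  rewrite /piece; case: (ltngtP i l) => [il|li|->].
  - by rewrite (G_lt il (ltnW lN)).
  - by rewrite G_gt.
  - have hl : (1 <= l <= N)%N by rewrite (leq_trans _ l2) //= ltnW.
    rewrite (G_eq hl) /Gr /H (G_diff (ltnW lN)); ring.
have E3 : RHSf N y = x 1%N * y N N * \prod_(2 <= i < N) H i by [].
have E4 : RHSf r y = x 1%N * y r r * (\prod_(2 <= i < N) Gr i * Gr N).
  by rewrite /RHSf (big_nat_recr _ _ _ N2).
have E5 : Gr N = S * y N N + x N * y N r.
  by rewrite /Gr /Gf big_nat1 mulr_suml.
rewrite E1 E2 E3 E4 E5 Ht; ring.
Qed.

End Alg.


Definition Lsum (R : comRingType) K (x : nat -> R) (y : nat -> nat -> R) :=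
  \sum_(T : {ffun 'I_K -> 'I_K} | incr_tree T) wt_y x y T.

Lemma step (R : comRingType) k (x : nat -> R) y :
  Lsum k.+2 x y = y k.+2 k.+2 * ((\sum_(p : 'I_k.+1) x p.+1) * Lsum k.+1 x y +
     \sum_(m : 'I_k.+1 | (0 < m)%N) Lsum k.+1 x (ym k.+2 x y m.+1)).
Proof.
rewrite /Lsum sum_ext.
rewrite (eq_bigr _ (fun T hT => per_tree x y hT)) -mulr_sumr; congr (_ * _).
rewrite big_split /= -mulr_sumr; congr (_ + _).
by rewrite exchange_big.
Qed.

Lemma L1 (R : comRingType) (x : nat -> R) y : Lsum 1 x y = 1.
Proof.
rewrite /Lsum (big_pred1 [ffun => ord0]).
  by rewrite /wt_y big_pred0 // => v; case: v => [[|]].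
move=> T /=; apply/idP/eqP => [_|->].
  by apply/ffunP => v; rewrite ffunE; apply: val_inj; case: (T v) => [[|]].
by apply/forallP => v; rewrite ffunE; case: v => [[|]].
Qed.

Lemma main (R : comRingType) n (x : nat -> R) y :
  Lsum n.+2 x y = RHSf x n.+2 y.
Proof.
elim: n y => [|n IH] y.
  rewrite step L1 big_ord1 [X in _ + X]big_pred0; last by case => [[|]].
  rewrite /RHSf big_geq // /=; ring.
rewrite step (eq_bigr _ (fun m _ => IH _)) IH.
exact: final_alg.
Qed.


Unset Implicit Arguments.

Theorem theorem1p1 (R : comRingType) (r : nat) (hr : (2 <= r)%N)
    (x : nat -> R) (y : nat -> nat -> R) :
  \sum_(T : {ffun 'I_r -> 'I_r} | incr_tree T) wt_y x y T
  = x 1%N * y r r *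
    \prod_(2 <= i < r)
      (\sum_(1 <= j < i.+1) x j * y i i + \sum_(i.+1 <= j < r.+1) x i * y i j).
Proof.
case: r hr => [|[|n]] // _.
by have := @main R n x y; rewrite /Lsum /RHSf /Gf => ->.
Qed.
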